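(* Let $a\ge 1$ and let $v$ be a valuation on a finite set $X$. The following are equivalent: (0) $v$ is $a$-submodular; (1) for every $x\in X$ and $S\subseteq T\subseteq X$ with $x\notin T$, $a\,v(x\mid S)\ge v(x\mid T)$; (2) for every $S,T,V\subseteq X$ with $S\subseteq T$, $a\,v(V\mid S)\ge v(V\mid T)$; (3) for every $A,B\subseteq X$, $v(A)+a\,v(B)\ge v(A\cup B)+a\,v(A\cap B)$.
   Context: A valuation on a finite set $X$ is a function $v:2^X\to\mathbb{R}_{\ge 0}$ with $v(\emptyset)=0$ and monotone under inclusion. The marginal valuation is $v(A\mid W)=v(A\cup W)-v(W)$; $v(x\mid S)$ means $v(\{x\}\mid S)$. A valuation $w$ exhibits $a$-bounded complementarities if $w(A\cup\{x\})\le w(A)+a\,w(\{x\})$ for every set $A$ and item $x$. A valuation $v$ is $a$-submodular if for every $W\subseteq X$ the marginal valuation $v(\cdot\mid W)$ exhibits $a$-bounded complementarities. *)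

(* Defs.v *)
From mathcomp Require Import all_boot all_order all_algebra.
Set Implicit Arguments. Unset Strict Implicit. Unset Printing Implicit Defensive.
Import Order.TTheory GRing.Theory Num.Theory.
Local Open Scope ring_scope.

Definition valuation (R : realFieldType) (X : finType) (v : {set X} -> R) : Prop :=
  [/\ v set0 = 0,
      (forall A : {set X}, 0 <= v A) &
      (forall A B : {set X}, A \subset B -> v A <= v B)].

Definition marg (R : realFieldType) (X : finType) (v : {set X} -> R)
  (A W : {set X}) : R := v (A :|: W) - v W.

Definition bounded_compl (R : realFieldType) (X : finType) (a : R)
  (w : {set X} -> R) : Prop :=
  forall (A : {set X}) (x : X), w (x |: A) <= w A + a * w [set x].

Definition a_submodular (R : realFieldType) (X : finType) (a : R)
  (v : {set X} -> R) : Prop :=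
  forall W : {set X}, bounded_compl a (fun A => marg v A W).

(* Main.v *)
Require Import Defs.
From mathcomp Require Import all_boot all_order all_algebra.
From mathcomp Require Import lra.
Import Order.TTheory GRing.Theory Num.Theory.
Local Open Scope ring_scope.

Lemma p12 (R : realFieldType) (X : finType) (a : R)
  (v : {set X} -> R) (ha : 1 <= a) (hv : valuation v) :
  (forall (x : X) (S T : {set X}), S \subset T -> x \notin T ->
          marg v [set x] T <= a * marg v [set x] S) ->
  (forall S T V : {set X}, S \subset T -> marg v V T <= a * marg v V S).
Proof.
case: hv => v0 vp vm h1 S T V ST.
have a0 : 0 <= a by apply: le_trans ha.
have [n] := ubnP #|V|; elim: n V => [|n IH] V; first by rewrite ltn0.
rewrite ltnS => hV.
have [->|[x xV]] := set_0Vmem V.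
  by rewrite /marg !set0U !subrr mulr0.
set V' := V :\ x.
have hV' : (#|V'| < n)%N.
  by move: hV; rewrite (cardsD1 x V) xV add1n.
have IH' := IH V' hV'.
have eV : V = x |: V' by rewrite /V' setD1K.
rewrite /marg in IH' *.
case xT: (x \in T).
  have e1 : V :|: T = V' :|: T.
    by rewrite eV -setUA (setUidPr _) // sub1set inE xT orbT.
  have m : v (V' :|: S) <= v (V :|: S).
    by apply: vm; apply: setSU; exact: subsetDl.
  rewrite e1; apply: (le_trans IH'); rewrite ler_wpM2l //; lra.
have := h1 x (V' :|: S) (V' :|: T) (setUS _ ST).
have hx : x \notin V' :|: T by rewrite /V' !inE xT eqxx.
move=> /(_ hx).
rewrite /marg.
have e1 : V :|: T = [set x] :|: (V' :|: T) by rewrite eV setUA.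
have e2 : V :|: S = [set x] :|: (V' :|: S) by rewrite eV setUA.
rewrite e1 e2 -/V' => h.
rewrite mulrDr mulrN. rewrite mulrDr mulrN in h IH'.
lra.
Qed.

Theorem proposition5 (R : realFieldType) (X : finType) (a : R)
  (v : {set X} -> R) (ha : 1 <= a) (hv : valuation v) :
  [<-> a_submodular a v;
       (forall (x : X) (S T : {set X}), S \subset T -> x \notin T ->
          marg v [set x] T <= a * marg v [set x] S);
       (forall S T V : {set X}, S \subset T ->
          marg v V T <= a * marg v V S);
       (forall A B : {set X},
          v (A :|: B) + a * v (A :&: B) <= v A + a * v B)].
Proof.
have a0 : 0 <= a by apply: le_trans ha.
have hv' := hv; case: hv' => v0 vp vm.
tfae.
- move=> h0 x S T ST _.
  have := h0 S T x; rewrite /marg.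
  have e1 : (x |: T) :|: S = [set x] :|: T by rewrite -setUA (setUidPl ST).
  rewrite e1 (setUidPl ST). lra.
- exact: p12.
- move=> h2 A B.
  have := h2 (A :&: B) A B (subsetIl _ _); rewrite /marg.
  rewrite setUC (setUidPl (subsetIr A B)).
  rewrite mulrDr mulrN; lra.
- move=> h3 W A x; rewrite /marg.
  have := h3 (A :|: W) ([set x] :|: W).
  have -> : (A :|: W) :|: ([set x] :|: W) = (x |: A) :|: W.
    apply/setP=> y; rewrite !inE.
    by case: (y == x); case: (y \in A); case: (y \in W).
  have m : v W <= v ((A :|: W) :&: ([set x] :|: W)).
    by apply: vm; rewrite subsetI !subsetUr.
  have m' : a * v W <= a * v ((A :|: W) :&: ([set x] :|: W)).
    by rewrite ler_wpM2l.
  rewrite mulrDr mulrN. lra.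
Qed.
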